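(* Let $m>n$ and let $\mathbf{A}\in\mathbb{R}^{m\times n}$ have rank $n$, partitioned by rows as $\mathbf{A} = \begin{bmatrix}\mathbf{X}\\ \mathbf{Y}\end{bmatrix}$ with $\mathbf{X}\in\mathbb{R}^{n\times n}$ invertible (the top $n$ rows form a full-rank square matrix) and $\mathbf{Y}\in\mathbb{R}^{(m-n)\times n}$. Let $\mathbf{A} = \mathbf{L}\mathbf{Q}$ be its LQ decomposition with $\mathbf{Q}\in\mathbb{R}^{n\times n}$ orthogonal and $\mathbf{L}\in\mathbb{R}^{m\times n}$ lower triangular, partitioned as $\mathbf{L} = \begin{bmatrix}\mathbf{U}\\ \mathbf{V}\end{bmatrix}$ with $\mathbf{U}\in\mathbb{R}^{n\times n}$ (lower triangular, invertible, $\mathbf{X} = \mathbf{U}\mathbf{Q}$) and $\mathbf{V}\in\mathbb{R}^{(m-n)\times n}$ ($\mathbf{Y} = \mathbf{V}\mathbf{Q}$). Suppose $\mathbf{A}'\mapsto(\mathbf{L}(\mathbf{A}'),\mathbf{Q}(\mathbf{A}'))$ is a differentiable map on a neighborhood of $\mathbf{A}$ giving such a decomposition for each $\mathbf{A}'$ (e.g. normalized so $\mathbf{L}$ has positive diagonal). Let $\bar{\mathbf{Q}}\in\mathbb{R}^{n\times n}$ and $\bar{\mathbf{L}} = \begin{bmatrix}\bar{\mathbf{U}}\\ \bar{\mathbf{V}}\end{bmatrix}\in\mathbb{R}^{m\times n}$ be arbitrary upstream gradients, with $\bar{\mathbf{U}}\in\mathbb{R}^{n\times n}$, $\bar{\mathbf{V}}\in\mathbb{R}^{(m-n)\times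 n}$. Then the reverse-mode gradient is $\bar{\mathbf{A}} = \begin{bmatrix}\bar{\mathbf{X}}\\ \bar{\mathbf{Y}}\end{bmatrix}$ with $$\bar{\mathbf{X}} = \mathbf{U}^{-T}\left[\bar{\mathbf{Q}}_{prime} + \mathrm{copyltu}(\mathbf{M})\mathbf{Q}\right],\qquad \bar{\mathbf{Y}} = \bar{\mathbf{V}}\mathbf{Q},$$ where $\bar{\mathbf{Q}}_{prime} = \bar{\mathbf{Q}} + \bar{\mathbf{V}}^T\mathbf{Y}$ and $\mathbf{M} = \mathbf{U}^T\bar{\mathbf{U}} - \bar{\mathbf{Q}}_{prime}\mathbf{Q}^T$.
   Context: Reverse-mode gradient: given a differentiable map $\mathbf{A}\mapsto(\mathbf{L}(\mathbf{A}),\mathbf{Q}(\mathbf{A}))$ and upstream matrices $\bar{\mathbf{L}},\bar{\mathbf{Q}}$ of the same shapes as $\mathbf{L},\mathbf{Q}$, the gradient $\bar{\mathbf{A}}$ is the unique matrix of the shape of $\mathbf{A}$ such that $\mathrm{Tr}(\bar{\mathbf{A}}^T d\mathbf{A}) = \mathrm{Tr}(\bar{\mathbf{L}}^T d\mathbf{L}) + \mathrm{Tr}(\bar{\mathbf{Q}}^T d\mathbf{Q})$ for every direction $d\mathbf{A}$, where $d\mathbf{L}, d\mathbf{Q}$ are the directional derivatives of $\mathbf{L},\mathbf{Q}$ at $\mathbf{A}$ in direction $d\mathbf{A}$. For a square matrix $\mathbf{M}$, $\mathrm{copyltu}(\mathbf{M})$ is the symmetric matrix with entries $\mathrm{copyltu}(\mathbf{M})_{ij}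 = \mathbf{M}_{\max(i,j),\min(i,j)}$; equivalently $\mathrm{copyltu}(\mathbf{M}) = \mathrm{sym}(\mathbf{M}\circ\mathbf{E})$, where $\mathrm{sym}(\mathbf{B}) = (\mathbf{B}+\mathbf{B}^T)/2$, $\circ$ is the Hadamard product and $\mathbf{E}$ has $e_{ij}=0$ if $i<j$, $1$ if $i=j$, $2$ if $i>j$. $\mathbf{U}^{-T} = (\mathbf{U}^{-1})^T$. *)

(* Defs.v *)
From HB Require Import structures.
From mathcomp Require Import all_boot all_order all_algebra.
From mathcomp Require Import all_classical all_reals all_analysis.
Set Implicit Arguments. Unset Strict Implicit. Unset Printing Implicit Defensive.
Import Order.TTheory GRing.Theory Num.Theory.
Import numFieldNormedType.Exports.
Local Open Scope ring_scope.

Definition copyltu {R : Type} {n : nat} (M : 'M[R]_n) : 'M[R]_n :=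
  \matrix_(i < n, j < n) (if (i < j)%N then M j i else M i j).

Definition lower_trig {R : ringType} {m n : nat} (L : 'M[R]_(m, n)) : Prop :=
  forall (i : 'I_m) (j : 'I_n), (i < j)%N -> L i j = 0.

Definition orthogonal_mx {R : ringType} {n : nat} (Q : 'M[R]_n) : Prop :=
  Q *m Q^T = 1%:M /\ Q^T *m Q = 1%:M.

Definition is_reverse_gradient {R : realType} {m n k l : nat}
  (Lf : 'M[R]_(m, n) -> 'M[R]_(k, l)) (Qf : 'M[R]_(m, n) -> 'M[R]_n)
  (A : 'M[R]_(m, n)) (Lbar : 'M[R]_(k, l)) (Qbar : 'M[R]_n)
  (Abar : 'M[R]_(m, n)) : Prop :=
  forall dA : 'M[R]_(m, n),
    \tr (Abar^T *m dA) = \tr (Lbar^T *m 'D_dA Lf A) + \tr (Qbar^T *m 'D_dA Qf A).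

(* Main.v *)
Require Import Defs.
From HB Require Import structures.
From mathcomp Require Import all_boot all_order all_algebra.
From mathcomp Require Import all_classical all_reals all_analysis.
From mathcomp Require Import lra.
Import Order.TTheory GRing.Theory Num.Theory.
Import numFieldNormedType.Exports.
Local Open Scope ring_scope.

Section Alg.
Variable R : realType.

Lemma lt_mul m k n (A : 'M[R]_(m, k)) (B : 'M[R]_(k, n)) :
  lower_trig A -> lower_trig B -> lower_trig (A *m B).
Proof.
move=> hA hB i j ij; rewrite mxE big1 // => l _.
case: (ltnP i l) => il; first by rewrite hA // mul0r.
by rewrite hB ?mulr0 //; apply: leq_ltn_trans il ij.
Qed.

Lemma lt_inv n (U : 'M[R]_n) : lower_trig U -> U \in unitmx -> lower_trig (invmx U).
Proof.
move=> hU uU.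
have dU : forall i, U i i != 0.
  move=> i; move: uU; rewrite unitmxE unitfE det_trig; last by apply/is_trig_mxP.
  by apply: contra => /eqP h; rewrite (bigD1 i) //= h mul0r.
have hUT : U *m invmx U = 1%:M by rewrite mulmxV.
suff H : forall k (i : 'I_n) (j : 'I_n), val i = k -> (i < j)%N -> invmx U i j = 0.
  by move=> i j ij; apply: (H i).
elim/ltn_ind=> k IH i j ik ij.
have := congr1 (fun M : 'M[R]_n => M i j) hUT; rewrite !mxE (bigD1 i) //= big1.
  rewrite addr0 -(inj_eq val_inj) /= (ltn_eqF ij) /= => /eqP; rewrite mulf_eq0 (negbTE (dU i)) /=.
  by move/eqP.
move=> l li; case: (ltngtP i l) => il.
- by rewrite hU ?mul0r.
- rewrite (IH l) ?mulr0 //; first by rewrite -ik.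
  exact: ltn_trans il ij.
- by move: li; rewrite -(inj_eq val_inj) /= il eqxx.
Qed.


Lemma copyltu_sym n (M : 'M[R]_n) : (copyltu M)^T = copyltu M.
Proof.
apply/matrixP => i j; rewrite !mxE.
by case: (ltngtP i j) => ij //; rewrite (val_inj ij).
Qed.

Lemma tr_sym_skew n (B C : 'M[R]_n) : B^T = B -> C^T = - C -> \tr (B *m C) = 0.
Proof.
move=> hB hC.
have : \tr (B *m C) = - \tr (B *m C).
  by rewrite -{1}mxtrace_tr trmx_mul hB hC mulNmx raddfN mxtrace_mulC.
lra.
Qed.

Lemma tr_up_low n (S T : 'M[R]_n) : (forall i j : 'I_n, ~~ (i < j)%N -> S i j = 0) ->
  lower_trig T -> \tr (S^T *m T) = 0.
Proof.
move=> hS hT; rewrite /mxtrace big1 // => i _; rewrite mxE big1 // => k _.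
rewrite mxE; case: (ltnP k i) => ki; first by rewrite hT ?mulr0.
by rewrite hS ?mul0r // -leqNgt.
Qed.

Lemma zmod_id (V : zmodType) (a b c : V) : a + b = c + (b - (c - a)).
Proof. by rewrite opprB addrCA [c + _]addrCA subrr addr0 addrC. Qed.

Lemma alg n p (X : 'M[R]_n) (Y : 'M[R]_(p, n)) (L dL dA : 'M[R]_(n + p, n))
  (Q dQ Qbar Ubar : 'M[R]_n) (Vbar : 'M[R]_(p, n)) :
  Q *m Q^T = 1%:M -> Q^T *m Q = 1%:M -> col_mx X Y = L *m Q -> lower_trig L ->
  X \in unitmx ->
  dA = dL *m Q + L *m dQ -> dQ *m Q^T + Q *m dQ^T = 0 -> lower_trig dL ->
  let U := usubmx L in
  let Qbar' := Qbar + Vbar^T *m Y in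
  let M := U^T *m Ubar - Qbar' *m Q^T in
  let Xbar := (invmx U)^T *m (Qbar' + copyltu M *m Q) in
  let Ybar := Vbar *m Q in
  \tr ((col_mx Xbar Ybar)^T *m dA) =
    \tr ((col_mx Ubar Vbar)^T *m dL) + \tr (Qbar^T *m dQ).
Proof.
move=> hQQt hQtQ hA hL uX hdA hdQ hdL U Qb' M Xbar Ybar.
set Vl := dsubmx L.
have eL : L = col_mx U Vl by rewrite vsubmxK.
have [hX hY] : X = U *m Q /\ Y = Vl *m Q.
  by apply/eq_col_mx; rewrite -mul_col_mx -eL.
have uU : U \in unitmx by move: uX; rewrite hX unitmx_mul => /andP[].
have hU : lower_trig U by move=> i j ij; rewrite mxE; apply: hL.
set dX := usubmx dA; set dY := dsubmx dA; set dU := usubmx dL; set dV := dsubmx dL.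
have edA : dA = col_mx dX dY by rewrite vsubmxK.
have edL : dL = col_mx dU dV by rewrite vsubmxK.
have hdU_l : lower_trig dU by move=> i j ij; rewrite mxE; apply: hdL.
set C := dQ *m Q^T.
have hdQC : dQ = C *m Q by rewrite /C -mulmxA hQtQ mulmx1.
have hCt : C^T = - C.
  by rewrite /C trmx_mul trmxK; apply/eqP; rewrite -subr_eq0 opprK addrC hdQ.
have [hdX hdY] : dX = dU *m Q + U *m dQ /\ dY = dV *m Q + Vl *m dQ.
  by apply/eq_col_mx; rewrite -edA hdA -add_col_mx -!mul_col_mx -edL -eL.
have hdU : dX *m Q^T = dU + U *m C by rewrite hdX mulmxDl -!mulmxA hQQt mulmx1.
have hdV : dY *m Q^T = dV + Vl *m C by rewrite hdY mulmxDl -!mulmxA hQQt mulmx1.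
set W := invmx U *m (dX *m Q^T).
have hW : W = invmx U *m dU + C by rewrite /W hdU mulmxDr mulmxA mulVmx // mul1mx.
have hUW : U *m W = dX *m Q^T by rewrite /W mulKVmx.
have hIdX : invmx U *m dX = W *m Q by rewrite /W -!mulmxA hQtQ mulmx1.
clearbody C W.
set S := copyltu M - M.
have E1 : \tr (Xbar^T *m dX) = \tr ((Qb' *m Q^T + copyltu M)^T *m W).
  rewrite /Xbar trmx_mul trmxK -mulmxA hIdX mulmxA mxtrace_mulC mulmxA.
  congr (\tr (_ *m W)).
  by rewrite -[in RHS](mulmx1 (copyltu M)) -hQQt mulmxA -mulmxDl trmx_mul trmxK.
have E2 : \tr (Ybar^T *m dY) = \tr (Vbar^T *m (dY *m Q^T)).
  by rewrite /Ybar trmx_mul [in RHS]mulmxA [in RHS]mxtrace_mulC mulmxA.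
have E3 : \tr (Ubar^T *m dU) = \tr (Ubar^T *m U *m W) - \tr (Ubar^T *m U *m C).
  have -> : dU = U *m W - U *m C by rewrite hUW hdU addrK.
  by rewrite mulmxBr raddfB /= !mulmxA.
have E4 : \tr (Vbar^T *m dV) = \tr (Vbar^T *m (dY *m Q^T)) - \tr (Vbar^T *m Vl *m C).
  have -> : dV = dY *m Q^T - Vl *m C by rewrite hdV addrK.
  by rewrite mulmxBr raddfB /= !mulmxA.
have E5 : \tr (Qbar^T *m dQ) = \tr (Q *m Qbar^T *m C).
  by rewrite hdQC mulmxA mxtrace_mulC mulmxA.
have E6 : Qb' *m Q^T + copyltu M = U^T *m Ubar + S.
  by rewrite /S /M; apply: zmod_id.
have E7 : \tr (S^T *m W) = - \tr (M^T *m C).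
  rewrite hW mulmxDr raddfD /= tr_up_low ?add0r; last first.
  - by apply: lt_mul => //; apply: lt_inv.
  - by move=> i j ij; rewrite /S !mxE (negbTE ij) subrr.
  rewrite /S raddfB /= mulmxBl raddfB /= copyltu_sym (@tr_sym_skew _ _ _ (@copyltu_sym _ M) hCt).
  by rewrite sub0r.
have E8 : \tr (M^T *m C) = \tr (Ubar^T *m U *m C) - \tr (Q *m Qbar^T *m C)
     - \tr (Q *m Y^T *m Vbar *m C).
  rewrite /M /Qb' raddfB /= mulmxBl raddfB /= trmx_mul trmxK; rewrite -addrA -opprD; congr (_ - _).
  rewrite trmx_mul trmxK raddfD /= trmx_mul trmxK mulmxDr mulmxDl raddfD /=.
  by rewrite !mulmxA.
have E9 : \tr (Q *m Y^T *m Vbar *m C) = - \tr (Vbar^T *m Vl *m C).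
  rewrite hY trmx_mul [Q *m (_ *m _)]mulmxA hQQt mul1mx -mxtrace_tr !trmx_mul trmxK hCt.
  by rewrite mulNmx raddfN /= mxtrace_mulC.
rewrite edA edL !tr_col_mx !mul_row_col !mxtraceD E1 E2 E3 E4 E5 E6.
rewrite raddfD /= mulmxDl raddfD /= trmx_mul trmxK E7 E8 E9 !mulmxA.
lra.
Qed.
End Alg.

Section An.
Context {R : realType} {m0 n0 : nat}.
Local Notation V := 'M[R]_(m0, n0).

Lemma D_entry m n (F : V -> 'M[R]_(m, n)) a v i j :
  differentiable F a -> 'D_v (fun x => F x i j) a = ('D_v F a) i j.
Proof. by move=> dF; rewrite (derive_mx (@diff_derivable _ _ _ _ _ v dF)) mxE. Qed.

Lemma derivable_entry m n (F : V -> 'M[R]_(m, n)) a v i j :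
  differentiable F a -> derivable (fun x => F x i j) a v.
Proof.
move=> dF; apply: diff_derivable.
exact: (differentiable_comp dF (differentiable_coord _ i j)).
Qed.

Lemma D_sumprod m1 n1 m2 n2 k (F : V -> 'M[R]_(m1, n1)) (G : V -> 'M[R]_(m2, n2))
  a v (fi : 'I_k -> 'I_m1) (fj : 'I_k -> 'I_n1) (gi : 'I_k -> 'I_m2) (gj : 'I_k -> 'I_n2) :
  differentiable F a -> differentiable G a ->
  'D_v (fun x => \sum_(l < k) F x (fi l) (fj l) * G x (gi l) (gj l)) a =
  \sum_(l < k) (('D_v F a) (fi l) (fj l) * G a (gi l) (gj l)
               + F a (fi l) (fj l) * ('D_v G a) (gi l) (gj l)).
Proof.
move=> dF dG.
have -> : (fun x => \sum_(l < k) F x (fi l) (fj l) * G x (gi l) (gj l)) =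
  \sum_(l < k) ((fun x => F x (fi l) (fj l)) * (fun x => G x (gi l) (gj l))).
  by rewrite fct_sumE.
rewrite derive_sum; last first.
  by move=> l; apply: derivableM; apply: derivable_entry.
apply: eq_bigr => l _.
rewrite deriveM; try by apply: derivable_entry.
by rewrite !D_entry // addrC /GRing.scale /= mulrC [X in _ + X]mulrC.
Qed.

End An.

Theorem proposition3 (R : realType) (n p : nat) (hp : (0 < p)%N)
  (X : 'M[R]_n) (Y : 'M[R]_(p, n))
  (hrank : \rank (col_mx X Y) = n)
  (hX : X \in unitmx)
  (Lf : 'M[R]_(n + p, n) -> 'M[R]_(n + p, n))
  (Qf : 'M[R]_(n + p, n) -> 'M[R]_n)
  (hdec : \forall A' \near col_mx X Y,
            [/\ A' = Lf A' *m Qf A', orthogonal_mx (Qf A'), lower_trig (Lf A'),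
                differentiable Lf A' & differentiable Qf A'])
  (Qbar : 'M[R]_n) (Ubar : 'M[R]_n) (Vbar : 'M[R]_(p, n)) :
  let A := col_mx X Y in
  let L := Lf A in
  let Q := Qf A in
  let U := usubmx L in
  let Qbar' := Qbar + Vbar^T *m Y in
  let M := U^T *m Ubar - Qbar' *m Q^T in
  let Xbar := (invmx U)^T *m (Qbar' + copyltu M *m Q) in
  let Ybar := Vbar *m Q in
  is_reverse_gradient Lf Qf A (col_mx Ubar Vbar) Qbar (col_mx Xbar Ybar).

Proof.
move=> A L Q U Qb' M Xbar Ybar dA.
have [hAeq [hQQt hQtQ] hLt dLf dQf] := nbhs_singleton hdec.
have F1 : dA = 'D_dA Lf A *m Q + L *m 'D_dA Qf A.
  apply/matrixP => i j.
  have -> : dA i j = 'D_dA (fun x : 'M[R]_(n + p, n) => x i j) A.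
    by rewrite -[in LHS](derive_id A dA) (derive_mx (@derivable_id _ _ A dA)) mxE.
  rewrite (@near_eq_derive _ _ _ _
     (fun x => \sum_(l < n) Lf x i l * Qf x l j) A dA); last first.
    by apply: filterS hdec => x [h _ _ _ _]; rewrite {1}h mxE.
  rewrite (@D_sumprod _ _ _ _ _ _ _ _ _ _ _ dA (fun=> i) id id (fun=> j) dLf dQf).
  by rewrite !mxE -big_split.
have F2 : 'D_dA Qf A *m Q^T + Q *m ('D_dA Qf A)^T = 0.
  apply/matrixP => i j.
  have := @near_eq_derive _ _ _
     (fun x => \sum_(l < n) Qf x i l * Qf x j l) (cst (1%:M i j : R)) A dA.
  rewrite derive_cst (@D_sumprod _ _ _ _ _ _ _ _ _ _ _ dA (fun=> i) id (fun=> j) id dQf dQf).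
  move=> H; rewrite !mxE -[X in _ = X]H; last first.
    apply: filterS hdec => x [_ [h _] _ _ _].
    by rewrite -[RHS](congr1 (fun N : 'M[R]_n => N i j) h) mxE; apply: eq_bigr => l _; rewrite mxE.
  by rewrite -big_split; apply: eq_bigr => l _; rewrite !mxE.
have F3 : lower_trig ('D_dA Lf A).
  move=> i j ij; rewrite -D_entry //.
  rewrite (@near_eq_derive _ _ _ _ (cst (0 : R)) A dA) ?derive_cst //.
  by apply: filterS hdec => x [_ _ h _ _]; rewrite h.
exact: (@alg R n p X Y _ _ _ _ _ Qbar Ubar Vbar hQQt hQtQ hAeq hLt hX F1 F2 F3).
Qed.
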